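(* Let $(g,f)=(d_{n,k})_{n,k\ge 0}$ be a Riordan matrix possessing a type-I $B$-sequence $(b_j)_{j\ge 0}$, and let $A(t)$ and $B(t)=\sum_{j\ge0}b_jt^j$ be the generating functions of its $A$-sequence and of this $B$-sequence. Then $$f=t+tf\,B(tf),\qquad t=\bar f+t\bar f\,B(t\bar f),\qquad A(t)=1+t\,B\!\left(\frac{t^2}{A(t)}\right),$$ and these three formulas are equivalent to one another.
   Context: Let $K$ be $\mathbb{R}$ or $\mathbb{C}$. A (proper) Riordan matrix is a pair $(g,f)$ of formal power series in $K[[t]]$ with $g(0)=1$, $f(0)=0$, $f'(0)\neq 0$, identified with the infinite lower triangular matrix $(d_{n,k})_{n,k\ge0}$, $d_{n,k}=[t^n]g(t)f(t)^k$; we set $d_{n,k}=0$ if $n<0$, $k<0$ or $k>n$. $\bar f$ denotes the compositional inverse of $f$. The $A$-sequence $(a_j)_{j\ge0}$ of $(g,f)$ is the unique sequence whose generating function $A(t)=\sum_j a_jt^j$ satisfies $f(t)=tA(f(t))$ (equivalently $\bar f(t)=t/A(t)$). A type-I $B$-sequence of $(g,f)$ is a sequence $(b_j)_{j\ge0}$ such that $d_{n+1,k}=d_{n,k-1}+\sum_{j\ge0}b_j d_{n-j,k+j}$ for all $n\ge0$ and $k\ge1$. *)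

(* Defs.v *)
From HB Require Import structures.
From mathcomp Require Import all_boot all_order all_algebra.
Set Implicit Arguments. Unset Strict Implicit. Unset Printing Implicit Defensive.
Import Order.TTheory GRing.Theory Num.Theory.
Local Open Scope ring_scope.

Section FPS.
Variable K : fieldType.

(* a formal power series sum_n a n t^n *)
Definition fps := nat -> K.

Definition fps_one : fps := fun n => (n == 0%N)%:R.
Definition fps_X : fps := fun n => (n == 1%N)%:R.
Definition fps_add (a b : fps) : fps := fun n => a n + b n.
Definition fps_mul (a b : fps) : fps :=
  fun n => \sum_(i < n.+1) a i * b (n - i)%N.
Fixpoint fps_pow (a : fps) (k : nat) : fps :=
  if k is k'.+1 then fps_mul a (fps_pow a k') else fps_one.
(* composition a(g), meaningful when g 0 = 0 *)
Definition fps_comp (a g : fps) : fps :=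
  fun n => \sum_(k < n.+1) a k * fps_pow g k n.

(* multiplicative inverse of a series with nonzero constant term *)
Fixpoint fps_inv_seq (a : fps) (n : nat) : seq K :=
  if n is n'.+1 then
    let s := fps_inv_seq a n' in
    rcons s (- (a 0%N)^-1 * \sum_(1 <= i < n.+1) a i * nth 0 s (n - i)%N)
  else [:: (a 0%N)^-1].
Definition fps_inv (a : fps) : fps := fun n => nth 0 (fps_inv_seq a n) n.

Definition riordan (g f : fps) : Prop :=
  g 0%N = 1 /\ f 0%N = 0 /\ f 1%N != 0.

Definition rentry (g f : fps) (n k : nat) : K := fps_mul g (fps_pow f k) n.

Definition comp_inverse (f fbar : fps) : Prop :=
  fbar 0%N = 0 /\ fps_comp f fbar = fps_X /\ fps_comp fbar f = fps_X.

(* A is (the generating function of) the A-sequence of (g,f): f = t A(f) *)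
Definition A_seq (f A : fps) : Prop := f = fps_mul fps_X (fps_comp A f).

(* b is a type-I B-sequence of (g,f); terms d_{n-j,k+j} with j > n vanish *)
Definition typeI_Bseq (g f b : fps) : Prop :=
  forall n k : nat, (0 < k)%N ->
    rentry g f n.+1 k =
      rentry g f n k.-1 + \sum_(j < n.+1) b j * rentry g f (n - j)%N (k + j)%N.

End FPS.

(* Main.v *)
Require Import Defs.
From HB Require Import structures.
From mathcomp Require Import all_boot all_order all_algebra.
From mathcomp Require Import zify.
From Stdlib Require Import FunctionalExtensionality.
Import GRing.Theory Num.Theory.
Set Implicit Arguments. Unset Strict Implicit. Unset Printing Implicit Defensive.
Local Open Scope ring_scope.

Section Infra.
Variable K : fieldType.
Implicit Types a b c g h : fps K.
Implicit Types p q r : {poly K}.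

Definition P N a : {poly K} := \poly_(i < N.+1) a i.
Definition em N p q := forall i, (i <= N)%N -> p`_i = q`_i.

Lemma coefP N a i : (i <= N)%N -> (P N a)`_i = a i.
Proof. by move=> h; rewrite coef_poly ltnS h. Qed.

Lemma em_refl N p : em N p p. Proof. by []. Qed.
Lemma em_sym N p q : em N p q -> em N q p. Proof. by move=> h i hi; rewrite h. Qed.
Lemma em_trans N p q r : em N p q -> em N q r -> em N p r.
Proof. by move=> h1 h2 i hi; rewrite h1 ?h2. Qed.

Lemma em_add N p p' q q' : em N p p' -> em N q q' -> em N (p + q) (p' + q').
Proof. by move=> h1 h2 i hi; rewrite !coefD h1 ?h2. Qed.

Lemma em_mul N p p' q q' : em N p p' -> em N q q' -> em N (p * q) (p' * q').
Proof.
move=> h1 h2 i hi; rewrite !coefM; apply: eq_bigr => j _.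
have hj := ltn_ord j.
by rewrite h1 ?h2 //; lia.
Qed.

Lemma em_exp N p q k : em N p q -> em N (p ^+ k) (q ^+ k).
Proof.
move=> h; elim: k => [|k IH]; first by rewrite !expr0.
by rewrite !exprS; apply: em_mul.
Qed.

Lemma coef_exp_low p j i : p`_0 = 0 -> (i < j)%N -> (p ^+ j)`_i = 0.
Proof.
move=> h0; elim: j i => [//|j IH] i hi.
rewrite exprS coefM big1 // => [[[|k] hk]] _ /=.
  by rewrite h0 mul0r.
by rewrite IH ?mulr0 //; lia.
Qed.

Lemma sum_ext_zero (F : nat -> K) n m : (n <= m)%N ->
  (forall k, (n <= k)%N -> (k < m)%N -> F k = 0) ->
  \sum_(k < m) F k = \sum_(k < n) F k.
Proof.
move=> hnm hF; rewrite -!(big_mkord xpredT) (@big_cat_nat _ _ _ n) //=.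
rewrite [X in _ + X]big1_seq ?addr0 // => k /andP [_].
by rewrite mem_index_iota => /andP [h1 h2]; apply: hF.
Qed.

Lemma sum_ext_zeroV (V : nmodType) (F : nat -> V) n m : (n <= m)%N ->
  (forall k, (n <= k)%N -> (k < m)%N -> F k = 0) ->
  \sum_(k < m) F k = \sum_(k < n) F k.
Proof.
move=> hnm hF; rewrite -!(big_mkord xpredT) (@big_cat_nat _ _ _ n) //=.
rewrite [X in _ + X]big1_seq ?addr0 // => k /andP [_].
by rewrite mem_index_iota => /andP [h1 h2]; apply: hF.
Qed.

Lemma comp_polyEw p q M : (size p <= M)%N ->
  p \Po q = \sum_(j < M) p`_j *: q ^+ j.
Proof.
move=> hM; rewrite comp_polyE.
rewrite (@sum_ext_zeroV _ (fun j => p`_j *: q ^+ j) _ _ hM) //.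
by move=> k hk _; rewrite nth_default ?scale0r.
Qed.

Lemma comp_coef p q M i : (size p <= M)%N ->
  (p \Po q)`_i = \sum_(j < M) p`_j * (q ^+ j)`_i.
Proof.
move=> hM; rewrite comp_polyE coef_sum.
rewrite (@sum_ext_zero (fun j => p`_j * (q ^+ j)`_i) _ _ hM).
  by apply: eq_bigr => j _; rewrite coefZ.
by move=> k hk _; rewrite nth_default ?mul0r.
Qed.

Lemma em_comp N p p' q q' : em N p p' -> em N q q' -> q`_0 = 0 -> q'`_0 = 0 ->
  em N (p \Po q) (p' \Po q').
Proof.
move=> h1 h2 z1 z2 i hi.
rewrite (@comp_coef _ _ (size p + size p')%N) ?leq_addr //.
rewrite (@comp_coef _ _ (size p + size p')%N) ?leq_addl //.
apply: eq_bigr => j _.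
case: (leqP j i) => hj.
  rewrite h1; last by apply: leq_trans hj hi.
  by rewrite (em_exp j h2 hi).
by rewrite !coef_exp_low ?mulr0.
Qed.

Lemma TP_add N a b : em N (P N (fps_add a b)) (P N a + P N b).
Proof. by move=> i hi; rewrite coefD !coefP. Qed.

Lemma TP_mul N a b : em N (P N (fps_mul a b)) (P N a * P N b).
Proof.
move=> i hi; rewrite coefM coefP //; apply: eq_bigr => j _.
have hj := ltn_ord j.
by rewrite !coefP //; lia.
Qed.

Lemma TP_one N : em N (P N (fps_one K)) 1.
Proof. by move=> i hi; rewrite coefP // coef1. Qed.

Lemma TP_X N : em N (P N (fps_X K)) 'X.
Proof. by move=> i hi; rewrite coefP // coefX. Qed.

Lemma TP_pow N a k : em N (P N (fps_pow a k)) (P N a ^+ k).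
Proof.
elim: k => [|k IH] /=; first by rewrite expr0; apply: TP_one.
rewrite exprS; apply: em_trans; first exact: TP_mul.
by apply: em_mul.
Qed.

Lemma P0 N a : (P N a)`_0 = a 0%N.
Proof. by rewrite coefP. Qed.

Lemma TP_comp N a g : g 0%N = 0 -> em N (P N (fps_comp a g)) (P N a \Po P N g).
Proof.
move=> g0 i hi; rewrite coefP // (@comp_coef _ _ N.+1) ?size_poly //.
rewrite (@sum_ext_zero (fun j => (P N a)`_j * (P N g ^+ j)`_i) i.+1) //.
  apply: eq_bigr => j _; have hj := ltn_ord j.
  have hjN : (j <= N)%N by rewrite -ltnS (leq_trans hj) // ltnS.
  by rewrite coefP // -(@TP_pow N g j i hi) coefP.
by move=> k hk _; rewrite coef_exp_low ?mulr0 // P0.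
Qed.

Lemma fps_ext a b : (forall N, em N (P N a) (P N b)) -> a = b.
Proof.
move=> h; apply: functional_extensionality => n.
by rewrite -(coefP a (leqnn n)) -(coefP b (leqnn n)) (h n).
Qed.


Lemma fps_ext2 a b (pa pb : nat -> {poly K}) :
  (forall N, em N (P N a) (pa N)) -> (forall N, em N (P N b) (pb N)) ->
  (forall N, pa N = pb N) -> a = b.
Proof.
move=> ha hb e; apply: fps_ext => N; apply: em_trans (ha N) _.
by rewrite e; apply: em_sym.
Qed.

Notation fm := fps_mul.
Notation fa := fps_add.
Notation fc := fps_comp.

Lemma fmulC a b : fm a b = fm b a.
Proof.
by apply: (@fps_ext2 _ _ (fun N => P N a * P N b) (fun N => P N b * P N a));
  [move=> N; exact: TP_mul | move=> N; exact: TP_mul | move=> N; rewrite mulrC].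
Qed.

Lemma fmulA a b c : fm a (fm b c) = fm (fm a b) c.
Proof.
apply: (@fps_ext2 _ _ (fun N => P N a * (P N b * P N c)) (fun N => (P N a * P N b) * P N c)).
- move=> N; apply: em_trans; first exact: TP_mul.
  by apply: em_mul => //; exact: TP_mul.
- move=> N; apply: em_trans; first exact: TP_mul.
  by apply: em_mul => //; exact: TP_mul.
- by move=> N; rewrite mulrA.
Qed.

Lemma fmulDr a b c : fm a (fa b c) = fa (fm a b) (fm a c).
Proof.
apply: (@fps_ext2 _ _ (fun N => P N a * (P N b + P N c)) (fun N => P N a * P N b + P N a * P N c)).
- move=> N; apply: em_trans; first exact: TP_mul.
  by apply: em_mul => //; exact: TP_add.
- move=> N; apply: em_trans; first exact: TP_add.
  by apply: em_add; exact: TP_mul.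
- by move=> N; rewrite mulrDr.
Qed.

Lemma fmul1 a : fm a (fps_one K) = a.
Proof.
apply: (@fps_ext2 _ _ (fun N => P N a * 1) (fun N => P N a)) => //.
- move=> N; apply: em_trans; first exact: TP_mul.
  by apply: em_mul => //; exact: TP_one.
- by move=> N; rewrite mulr1.
Qed.

Lemma fmul1l a : fm (fps_one K) a = a.
Proof. by rewrite fmulC fmul1. Qed.

Lemma fcompD a b g : g 0%N = 0 -> fc (fa a b) g = fa (fc a g) (fc b g).
Proof.
move=> g0.
apply: (@fps_ext2 _ _ (fun N => (P N a + P N b) \Po P N g) (fun N => (P N a \Po P N g) + (P N b \Po P N g))).
- move=> N; apply: em_trans; first exact: TP_comp.
  by apply: em_comp; rewrite ?P0 //; exact: TP_add.
- move=> N; apply: em_trans; first exact: TP_add.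
  by apply: em_add; exact: TP_comp.
- by move=> N; rewrite comp_polyD.
Qed.

Lemma fcompM a b g : g 0%N = 0 -> fc (fm a b) g = fm (fc a g) (fc b g).
Proof.
move=> g0.
apply: (@fps_ext2 _ _ (fun N => (P N a * P N b) \Po P N g) (fun N => (P N a \Po P N g) * (P N b \Po P N g))).
- move=> N; apply: em_trans; first exact: TP_comp.
  by apply: em_comp; rewrite ?P0 //; exact: TP_mul.
- move=> N; apply: em_trans; first exact: TP_mul.
  by apply: em_mul; exact: TP_comp.
- by move=> N; rewrite comp_polyM.
Qed.

Lemma fcompX g : g 0%N = 0 -> fc (fps_X K) g = g.
Proof.
move=> g0.
apply: (@fps_ext2 _ _ (fun N => 'X \Po P N g) (fun N => P N g)) => //.
- move=> N; apply: em_trans; first exact: TP_comp.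
  by apply: em_comp; rewrite ?P0 //; exact: TP_X.
- by move=> N; rewrite comp_polyX.
Qed.

Lemma fX0 : fps_X K 0%N = 0. Proof. by []. Qed.

Lemma fcomp_X a : fc a (fps_X K) = a.
Proof.
apply: (@fps_ext2 _ _ (fun N => P N a \Po 'X) (fun N => P N a)) => //.
- move=> N; apply: em_trans; first exact: TP_comp.
  by apply: em_comp; rewrite ?P0 ?coefX //; exact: TP_X.
- by move=> N; rewrite comp_polyXr.
Qed.

Lemma fmul0 a b : fm a b 0%N = a 0%N * b 0%N.
Proof. by rewrite /fps_mul big_ord1. Qed.

Lemma fcomp0 a g : fc a g 0%N = a 0%N.
Proof. by rewrite /fps_comp big_ord1 /= /fps_one /= mulr1. Qed.

Lemma fcompA a h k : h 0%N = 0 -> k 0%N = 0 -> fc (fc a h) k = fc a (fc h k).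
Proof.
move=> h0 k0.
apply: (@fps_ext2 _ _ (fun N => (P N a \Po P N h) \Po P N k) (fun N => P N a \Po (P N h \Po P N k))).
- move=> N; apply: em_trans; first exact: TP_comp.
  by apply: em_comp; rewrite ?P0 //; exact: TP_comp.
- move=> N; apply: em_trans; first by apply: TP_comp; rewrite fcomp0.
  have e := @TP_comp N h k k0.
  apply: em_comp; rewrite ?P0 ?fcomp0 //.
  by rewrite -(e 0%N) // P0 fcomp0.
- by move=> N; rewrite comp_polyA.
Qed.

Lemma fXshift a n : fm (fps_X K) a n.+1 = a n.
Proof.
rewrite -(@coefP n.+1 (fm (fps_X K) a) n.+1 (leqnn _)).
have h : em n.+1 (P n.+1 (fm (fps_X K) a)) ('X * P n.+1 a).
  apply: em_trans; first exact: TP_mul.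
  apply: em_mul; [exact: TP_X | exact: em_refl].
rewrite (@h n.+1 (leqnn _)) coefXM /= coefP //.
Qed.

Lemma fX_cancel a b : fm (fps_X K) a = fm (fps_X K) b -> a = b.
Proof.
move=> e; apply: functional_extensionality => n.
by rewrite -(fXshift a n) -(fXshift b n) e.
Qed.

Lemma fXfirst a : fm (fps_X K) a 0%N = 0.
Proof. by rewrite fmul0 fX0 mul0r. Qed.

Lemma inv_size a n : size (fps_inv_seq a n) = n.+1.
Proof. by elim: n => [|n IH] //=; rewrite size_rcons IH. Qed.

Lemma inv_prefix a n m i : (i <= n)%N ->
  nth 0 (fps_inv_seq a (m + n)) i = nth 0 (fps_inv_seq a n) i.
Proof.
move=> hi; elim: m => [//|m IH].
rewrite addSn /= nth_rcons inv_size.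
by have -> : (i < (m + n).+1)%N by rewrite ltnS (leq_trans hi) // leq_addl.
Qed.

Lemma inv_nth a n i : (i <= n)%N -> fps_inv a i = nth 0 (fps_inv_seq a n) i.
Proof.
move=> hi; rewrite /fps_inv -(subnK hi) inv_prefix //.
Qed.

Lemma fmul_inv a : a 0%N != 0 -> fm a (fps_inv a) = fps_one K.
Proof.
move=> a0; apply: functional_extensionality => n.
case: n => [|n].
  by rewrite fmul0 /fps_inv /= mulfV // /fps_one eqxx.
rewrite /fps_mul big_ord_recl /=.
have -> : fps_inv a n.+1 = - (a 0%N)^-1 *
   \sum_(1 <= i < n.+2) a i * nth 0 (fps_inv_seq a n) (n.+1 - i).
  by rewrite /fps_inv /= nth_rcons inv_size ltnn eqxx.
rewrite mulrA mulrN mulfV // mulN1r.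
rewrite big_add1 /= big_mkord.
rewrite [X in - X + _](_ : _ = \sum_(i < n.+1) a (bump 0%N i) * fps_inv a (n.+1 - bump 0 i)%N).
  by rewrite addNr /fps_one.
apply: eq_bigr => i _; rewrite /bump /= add1n.
by rewrite (@inv_nth a n) // subSS leq_subr.
Qed.

Lemma fmul_cancel g u v : g 0%N != 0 -> fm g u = fm g v -> u = v.
Proof.
move=> g0 e.
have : fm (fps_inv g) (fm g u) = fm (fps_inv g) (fm g v) by rewrite e.
by rewrite !fmulA ![fm (fps_inv g) g]fmulC fmul_inv // !fmul1l.
Qed.

Lemma fpowM a b j : fps_pow (fm a b) j = fm (fps_pow a j) (fps_pow b j).
Proof.
elim: j => [|j IH] /=; first by rewrite fmul1.
rewrite IH !fmulA; congr (fm _ _).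
by rewrite -!fmulA [fm b (fps_pow a j)]fmulC.
Qed.

Lemma fXn_coef j a n : (j <= n)%N -> fm (fps_pow (fps_X K) j) a n = a (n - j)%N.
Proof.
elim: j n => [|j IH] n hj /=; first by rewrite fmul1l subn0.
case: n hj => [//|n] hj.
by rewrite -fmulA fXshift IH // subSS.
Qed.

Lemma comp_mul_coef u B h n : h 0%N = 0 ->
  fm u (fc B h) n = \sum_(j < n.+1) B j * fm u (fps_pow h j) n.
Proof.
move=> h0.
have e : em n (P n (fm u (fc B h))) (P n u * (P n B \Po P n h)).
  apply: em_trans; first exact: TP_mul.
  by apply: em_mul; [exact: em_refl | exact: TP_comp].
rewrite -(@coefP n _ n (leqnn _)) (@e n (leqnn _)).
rewrite (@comp_polyEw _ _ n.+1) ?size_poly // mulr_sumr coef_sum.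
apply: eq_bigr => j _; have hj := ltn_ord j.
rewrite -scalerAr coefZ coefP //.
have e2 : em n (P n (fm u (fps_pow h j))) (P n u * P n h ^+ j).
  apply: em_trans; first exact: TP_mul.
  by apply: em_mul; [exact: em_refl | exact: TP_pow].
by rewrite -(@e2 n (leqnn _)) coefP.
Qed.

Lemma fmulCA a b c : fm a (fm b c) = fm b (fm a c).
Proof. by rewrite !fmulA [fm a b]fmulC. Qed.

Lemma fmulDl a b c : fm (fa a b) c = fa (fm a c) (fm b c).
Proof. by rewrite fmulC fmulDr ![fm c _]fmulC. Qed.

End Infra.

Theorem proposition2p1 (K : numFieldType) (g f fbar A : fps K) :
  riordan g f -> comp_inverse f fbar -> A_seq f A ->
  let eq1 := fun B : fps K =>
    f = fps_add (fps_X K)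
          (fps_mul (fps_mul (fps_X K) f) (fps_comp B (fps_mul (fps_X K) f))) in
  let eq2 := fun B : fps K =>
    fps_X K = fps_add fbar
          (fps_mul (fps_mul (fps_X K) fbar) (fps_comp B (fps_mul (fps_X K) fbar))) in
  let eq3 := fun B : fps K =>
    A = fps_add (fps_one K)
          (fps_mul (fps_X K)
             (fps_comp B (fps_mul (fps_mul (fps_X K) (fps_X K)) (fps_inv A)))) in
  (forall b : fps K, typeI_Bseq g f b -> [/\ eq1 b, eq2 b & eq3 b]) /\
  (forall B : fps K, (eq1 B <-> eq2 B) /\ (eq2 B <-> eq3 B)).
Proof.
move=> [g0 [f0 f1]] [fb0 [ffb fbf]] hA eq1 eq2 eq3.
have Xf0 : fps_mul (fps_X K) f 0%N = 0 by rewrite fXfirst.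
have Xfb0 : fps_mul (fps_X K) fbar 0%N = 0 by rewrite fXfirst.
have e12 : forall B, eq1 B <-> eq2 B.
  move=> B; rewrite /eq1 /eq2; split => e.
  - have := congr1 (fun s => fps_comp s fbar) e => /=.
    rewrite ffb fcompD // fcompX // !fcompM // fcompX // ffb fcompA //.
    by rewrite fcompM // fcompX // ffb [fps_mul fbar _]fmulC.
  - have := congr1 (fun s => fps_comp s f) e => /=.
    rewrite fcompX // fcompD // fbf !fcompM // fcompX // fbf fcompA //.
    by rewrite fcompM // fcompX // fbf [fps_mul f _]fmulC => <-.
have hfA : fps_mul fbar A = fps_X K.
  have := congr1 (fun s => fps_comp s fbar) hA => /=.
  by rewrite ffb fcompM // fcompX // fcompA // ffb fcomp_X => <-.
have A0 : A 0%N != 0.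
  have : f 1%N = A 0%N by rewrite {1}hA fXshift fcomp0.
  by move=> <-.
have hfb : fps_mul (fps_X K) (fps_inv A) = fbar.
  by rewrite -hfA -fmulA fmul_inv // fmul1.
have e23 : forall B, eq2 B <-> eq3 B.
  move=> B; rewrite /eq2 /eq3 -[fps_mul (fps_mul (fps_X K) (fps_X K)) _]fmulA hfb.
  set C := fps_comp B _.
  split => e.
  - apply: fX_cancel; rewrite fmulDr fmul1.
    have -> : fps_mul (fps_X K) A = fps_mul (fps_add fbar (fps_mul (fps_mul (fps_X K) fbar) C)) A.
      by rewrite -e.
    rewrite fmulDl hfA; congr (fps_add _ _).
    by rewrite -!fmulA [fps_mul C A]fmulC [fps_mul fbar (fps_mul A C)]fmulA hfA.
  - apply: (@eq_trans _ _ (fps_mul fbar A)); first by rewrite hfA.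
    rewrite e fmulDr fmul1; congr (fps_add _ _).
    by rewrite fmulA [fps_mul fbar _]fmulC.
split; last by move=> B; split; [exact: e12 | exact: e23].
move=> b hB.
have e1 : eq1 b.
  rewrite /eq1; apply: (@fmul_cancel _ g); first by rewrite g0 oner_neq0.
  apply: functional_extensionality => n.
  case: n => [|n].
    by rewrite !fmul0 f0 mulr0 /fps_add fX0 fmul0 fXfirst mul0r addr0 mulr0.
  have hb := hB n 1%N erefl.
  rewrite /rentry /= fmul1 in hb.
  rewrite hb fmulDr /fps_add [fps_mul g (fps_X K)]fmulC fXshift fmul1; congr (_ + _).
  rewrite -fmulA fmulCA fmulA -[fps_mul (fps_mul (fps_X K) g) _]fmulA [fps_mul g (fps_mul f _)]fmulA fXshift comp_mul_coef //.
  apply: eq_bigr => j _; congr (_ * _).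
  rewrite add0n fpowM [in RHS]fmulCA fXn_coef; last by rewrite -ltnS.
  by rewrite fmulA.
by split => //; [apply/e12 | apply/e23/e12].
Qed.
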